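(* Let $A$ be a totally ordered alphabet, $F(A)$ the free group on $A$, and $\ell\in A$. If $g\in F(A)$ is a palindrome, then $\lambda_\ell(g)\ell$ is a palindrome and $\ell\rho_\ell(g)$ is a palindrome.
   Context: The reversal $g\mapsto\tilde g$ is the unique anti-automorphism of $F(A)$ with $\tilde a=a$ for all $a\in A$; a palindrome is an element $g$ with $\tilde g=g$. For $\ell\in A$, $\lambda_\ell$ and $\rho_\ell$ are the automorphisms of $F(A)$ defined on letters $a\in A$ by: $\lambda_\ell(a)=a\ell^{-1}$ if $a<\ell$, $\lambda_\ell(\ell)=\ell$, $\lambda_\ell(a)=\ell a$ if $a>\ell$; and $\rho_\ell(a)=a\ell$ if $a<\ell$, $\rho_\ell(\ell)=\ell$, $\rho_\ell(a)=\ell^{-1}a$ if $a>\ell$. *)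

(* Defs.v *)
(* Free group F(A) on a totally ordered alphabet A, modelled by
   freely reduced words over A^{+-1}; group equality = equality of reduced words. *)
From HB Require Import structures.
From mathcomp Require Import all_boot all_order.
Set Implicit Arguments. Unset Strict Implicit. Unset Printing Implicit Defensive.
Import Order.TTheory.
Local Open Scope order_scope.

Section FreeGroup.
Variables (d : Order.disp_t) (A : orderType d).

(* a letter (a, true) is a, a letter (a, false) is a^-1 *)
Definition letter := (A * bool)%type.
Definition linv (x : letter) : letter := (x.1, ~~ x.2).

Fixpoint reduced (w : seq letter) : bool :=
  match w with
  | x :: ((y :: _) as w') => (y != linv x) && reduced w'
  | _ => true
  end.

Fixpoint red_acc (st w : seq letter) : seq letter :=
  match w with
  | [::] => rev st
  | x :: w' =>
      match st with
      | y :: st' => if y == linv x then red_acc st' w' else red_acc (x :: st) w'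
      | [::] => red_acc [:: x] w'
      end
  end.
Definition red (w : seq letter) := red_acc [::] w.

Definition fmul (u v : seq letter) := red (u ++ v).
Definition finv (u : seq letter) := rev (map linv u).
Definition gen (a : A) : seq letter := [:: (a, true)].

Definition limg (f : A -> seq letter) (x : letter) :=
  if x.2 then f x.1 else finv (f x.1).
Definition ext_hom (f : A -> seq letter) (w : seq letter) :=
  red (flatten (map (limg f) w)).
Definition ext_antihom (f : A -> seq letter) (w : seq letter) :=
  red (flatten (rev (map (limg f) w))).

Definition reversal (g : seq letter) := ext_antihom gen g.
Definition palindrome (g : seq letter) := reversal g = g.

Definition lambda_img (l a : A) : seq letter :=
  if a < l then [:: (a, true); (l, false)]
  else if a == l then [:: (l, true)]
  else [:: (l, true); (a, true)].
Definition rho_img (l a : A) : seq letter :=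
  if a < l then [:: (a, true); (l, true)]
  else if a == l then [:: (l, true)]
  else [:: (l, false); (a, true)].
Definition lambda (l : A) := ext_hom (lambda_img l).
Definition rho (l : A) := ext_hom (rho_img l).

End FreeGroup.

(* Main.v *)
Require Import Defs.
From mathcomp Require Import all_boot all_order.
Set Implicit Arguments. Unset Strict Implicit. Unset Printing Implicit Defensive.
Import Order.TTheory.

Section Aux.
Variables (d : Order.disp_t) (A : orderType d).
Local Notation L := (letter A).

Lemma linvK (x : L) : linv (linv x) = x.
Proof. by case: x => a []. Qed.

Lemma linv_sym (x y : L) : (x == linv y) = (y == linv x).
Proof. by apply/eqP/eqP => ->; rewrite linvK. Qed.

Definition push (x : L) (st : seq L) : seq L :=
  match st with
  | y :: st' => if y == linv x then st' else x :: st
  | [::] => [:: x]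
  end.

Definition F (st w : seq L) := foldl (fun s x => push x s) st w.

Lemma red_accE (st w : seq L) : red_acc st w = rev (F st w).
Proof.
elim: w st => [|x w IH] [|y st] //=; rewrite IH //.
by case: ifP.
Qed.

Lemma redE (w : seq L) : red w = rev (F [::] w).
Proof. exact: red_accE. Qed.

Lemma push_red x (st : seq L) : reduced st -> reduced (push x st).
Proof.
case: st => [|y st] //= h.
case: ifP => [_|/negbT ne].
  by case: st h => // z st /andP [].
by rewrite /= ne.
Qed.

Lemma F_red (st w : seq L) : reduced st -> reduced (F st w).
Proof. by elim: w st => [|x w IH] st //= h; apply: IH; apply: push_red. Qed.

Lemma push_cancel x (st : seq L) : reduced st -> push (linv x) (push x st) = st.
Proof.
case: st => [|y st] /=; first by rewrite linvK eqxx.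
case: ifP => [/eqP ->|ne].
  case: st => [|z st] //= /andP [nz _].
  by rewrite linvK; case: ifP => // /eqP e; move: nz; rewrite e linvK eqxx.
by rewrite /= linvK eqxx.
Qed.

Lemma K u (x : L) v : red (u ++ x :: linv x :: v) = red (u ++ v).
Proof.
rewrite !redE /F !foldl_cat /=.
by rewrite push_cancel //; apply: (@F_red [::] u).
Qed.

Lemma K' u (x : L) v : red (u ++ linv x :: x :: v) = red (u ++ v).
Proof. by rewrite -{2}(linvK x) K. Qed.

Lemma L1 (w st u v : seq L) :
  red (u ++ rev (F st w) ++ v) = red (u ++ rev st ++ w ++ v).
Proof.
elim: w st u => [|x w IH] st u //=.
rewrite IH; case: st => [|y st] //=.
case: ifP => [/eqP ->|_].
  by rewrite rev_cons cat_rcons (catA u (rev st) (linv x :: _)) K' catA.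
by rewrite (rev_cons x (y :: st)) cat_rcons.
Qed.

Lemma L2 (w st u v : seq L) :
  red (u ++ F st w ++ v) = red (u ++ rev w ++ st ++ v).
Proof.
elim: w st u => [|x w IH] st u //=.
rewrite IH rev_cons -cats1 -!catA /=; case: st => [|y st] //=.
case: ifP => [/eqP ->|_] //.
by rewrite (catA u (rev w) (x :: _)) K catA.
Qed.

Lemma red_cat_red (u w v : seq L) : red (u ++ red w ++ v) = red (u ++ w ++ v).
Proof. by rewrite [red w]redE L1. Qed.

Lemma red_rev_red (u w v : seq L) : red (u ++ rev (red w) ++ v) = red (u ++ rev w ++ v).
Proof. by rewrite [red w]redE revK L2. Qed.

Lemma red_congr (u s t v : seq L) : red s = red t -> red (u ++ s ++ v) = red (u ++ t ++ v).
Proof. by move=> h; rewrite -red_cat_red h red_cat_red. Qed.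

Lemma reduced_rcons (s : seq L) x :
  reduced (rcons s x) = reduced s && (if s is [::] then true else x != linv (last x s)).
Proof.
elim: s => [|y s IH] //=.
case: s IH => [|z s] IH /=; first by rewrite andbT.
by move: IH; rewrite /= => ->; rewrite andbA.
Qed.

Lemma reduced_rev (s : seq L) : reduced (rev s) = reduced s.
Proof.
elim: s => [|x s IH] //.
rewrite rev_cons reduced_rcons IH.
case: s IH => [|y s] IH //.
rewrite rev_cons last_rcons. case: (rev s) => [|? ?] /=; rewrite -/(reduced (y :: s)) linv_sym andbC //.
Qed.

Lemma F_reduced (w st : seq L) : reduced w ->
  (if w is x :: _ then (if st is y :: _ then y != linv x else true) else true) ->
  F st w = catrev w st.
Proof.
elim: w st => [|x w IH] st //= hw hc.
have -> : push x st = x :: st.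
  by case: st hc => [|y st] //= /negbTE ->.
apply: IH; first by case: w hw => // z w /andP [].
by case: w hw => // z w /andP [h _]; rewrite linv_sym.
Qed.

Lemma red_reduced (w : seq L) : reduced w -> red w = w.
Proof. by move=> h; rewrite redE F_reduced ?revK //; case: w h. Qed.

Lemma reversalE (h : seq L) : reversal h = red (rev h).
Proof.
rewrite /reversal /ext_antihom; congr red.
elim: h => [|x h IH] //=.
rewrite rev_cons -cats1 flatten_cat IH /= cats0 [rev (x :: h)]rev_cons -cats1.
have -> : limg (gen (A:=A)) x = [:: x] by case: x => a [].
by [].
Qed.

Lemma generic (p : seq L) (f1 f2 : L -> seq L) :
  (forall x u w, red (u ++ p ++ f1 x ++ w) = red (u ++ f2 x ++ p ++ w)) ->
  forall g u v, red (u ++ p ++ flatten (map f1 g) ++ v) =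
                red (u ++ flatten (map f2 g) ++ p ++ v).
Proof.
move=> H; elim=> [|x g IH] u v /=; first by [].
by rewrite -catA H catA IH -!catA.
Qed.

Lemma rev_flat (f : L -> seq L) g :
  rev (flatten (map f g)) = flatten (map (fun x => rev (f x)) (rev g)).
Proof.
elim: g => [|x g IH] //=.
by rewrite rev_cat IH rev_cons map_rcons -cats1 flatten_cat /= cats0.
Qed.

End Aux.

Theorem lemma4p1 (d : Order.disp_t) (A : orderType d) (l : A) (g : seq (letter A)) :
  reduced g -> palindrome g ->
  palindrome (fmul (lambda l g) (gen l)) /\ palindrome (fmul (gen l) (rho l g)).
Proof.
move=> hr hp.
have revg : rev g = g.
  by move: hp; rewrite /palindrome reversalE red_reduced // reduced_rev.
rewrite /palindrome /fmul /lambda /rho /ext_hom !reversalE.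
split.
- set f := limg (lambda_img l).
  set X := flatten (map f g).
  have -> : red (rev (red (red X ++ gen l))) = red ((l, true) :: rev X).
    have := red_rev_red [::] (red X ++ gen l) [::].
    rewrite !cats0 /= => ->.
    rewrite rev_cat /=.
    have := red_rev_red [:: (l,true)] X [::].
    by rewrite !cats0 /= => <-.
  have -> : red (red X ++ gen l) = red (X ++ [:: (l,true)]).
    by have := red_cat_red [::] X (gen l).
  rewrite /X rev_flat revg.
  have := generic (p := [:: (l,true)]) (f1 := fun x => rev (f x)) (f2 := f).
  move=> /(_ _ g [::] [::]); rewrite !cats0 /=; apply.
  move=> x u w.
  transitivity (red (u ++ ((l,true) :: rev (f x)) ++ w)); first by [].
  transitivity (red (u ++ (f x ++ [:: (l,true)]) ++ w)); last by rewrite -catA.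
  apply: red_congr.
  case: x => a []; rewrite /f /limg /lambda_img /=; case: (ltgtP a l) => h;
    rewrite /finv /rev /=.
  all: try by [].
  - exact: (etrans (K [::] (l,true) [:: (a,true)]) (esym (K' [:: (a,true)] (l,true) [::]))).
  - exact: (etrans (K [::] (l,true) [:: (a,false)]) (esym (K' [:: (a,false)] (l,true) [::]))).
  - exact: (etrans (K [::] (l,true) [::]) (esym (K' [::] (l,true) [::]))).
- set f' := limg (rho_img l).
  set X := flatten (map f' g).
  have -> : red (rev (red (gen l ++ red X))) = red (rev X ++ [:: (l, true)]).
    have := red_rev_red [::] (gen l ++ red X) [::].
    rewrite !cats0 /= => ->.
    rewrite rev_cons -cats1.
    by have := red_rev_red [::] X [:: (l,true)].
  have -> : red (gen l ++ red X) = red ((l,true) :: X).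
    by have := red_cat_red [:: (l,true)] X [::]; rewrite !cats0.
  rewrite /X rev_flat revg.
  have := generic (p := [:: (l,true)]) (f1 := f') (f2 := fun x => rev (f' x)).
  move=> /(_ _ g [::] [::]); rewrite !cats0 /= => <- //.
  move=> x u w.
  transitivity (red (u ++ ((l,true) :: f' x) ++ w)); first by [].
  transitivity (red (u ++ (rev (f' x) ++ [:: (l,true)]) ++ w)); last by rewrite -catA.
  apply: red_congr.
  case: x => a []; rewrite /f' /limg /rho_img /=; case: (ltgtP a l) => h;
    rewrite /finv /rev /=.
  all: try by [].
  - exact: (etrans (K [::] (l,true) [:: (a,true)]) (esym (K' [:: (a,true)] (l,true) [::]))).
  - exact: (etrans (K [::] (l,true) [:: (a,false)]) (esym (K' [:: (a,false)] (l,true) [::]))).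
  - exact: (etrans (K [::] (l,true) [::]) (esym (K' [::] (l,true) [::]))).
Qed.
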